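(* Let $t$ be the Thue-Morse word. For every $n\geq 1$, we have $PPL_t(n)=PPL^0_t(4n)\geq PPL_t(4n)$.
   Context: The Thue-Morse word $t=t[1]t[2]\cdots$ is the fixed point starting with $a$ of the morphism $\tau: a\mapsto abba,\ b\mapsto baab$. For $0\le i\le j$, $t(i..j]$ denotes the factor $t[i+1]\cdots t[j]$. A palindrome is a word $p=p[1]\cdots p[n]$ with $p[i]=p[n-i+1]$ for all $i$. $PPL_t(n)$ is the minimal number of nonempty palindromes whose concatenation equals the prefix $t(0..n]$. A decomposition $t(0..4n]=t(e_0..e_1]t(e_1..e_2]\cdots t(e_{k-1}..e_k]$ with $0=e_0<e_1<\cdots<e_k=4n$ into palindromes is called a $0$-decomposition if every $e_i$ is divisible by $4$; $PPL^0_t(4n)$ is the minimal number of palindromes in a $0$-decomposition of $t(0..4n]$. *)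

(* Defs.v *)
From mathcomp Require Import all_boot.
Set Implicit Arguments. Unset Strict Implicit. Unset Printing Implicit Defensive.

(* Letters: a = false, b = true. *)
Definition tau (x : bool) : seq bool :=
  if x then [:: true; false; false; true] else [:: false; true; true; false].

Definition tau_word (w : seq bool) : seq bool := flatten (map tau w).

Definition tm_prefix (k : nat) : seq bool := iter k tau_word [:: false].

(* t[i], 1-indexed (i >= 1): the i-th letter of the fixed point, read off
   tau^i(a), whose length 4^i >= i. *)
Definition t (i : nat) : bool := nth false (tm_prefix i) i.-1.

Definition factor (i j : nat) : seq bool := [seq t m | m <- iota i.+1 (j - i)].

Definition palindrome (p : seq bool) : bool := p == rev p.

(* es = [:: e_1; ...; e_k]: cut points 0 = e_0 < e_1 < ... < e_k = N with
   every t(e_{i-1}..e_i] a palindrome (nonempty by strictness). *)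
Definition pal_cuts (N : nat) (es : seq nat) : bool :=
  [&& sorted ltn (0 :: es), last 0 es == N &
      all (fun pr => palindrome (factor pr.1 pr.2)) (zip (0 :: es) es)].

Definition has_decomp (N k : nat) : Prop :=
  exists es, size es = k /\ pal_cuts N es.

(* ... a 0-decomposition (all cut points divisible by 4) into k palindromes *)
Definition has_decomp0 (N k : nat) : Prop :=
  exists es, size es = k /\ pal_cuts N es /\ all (fun e => 4 %| e) es.

Definition is_min (P : nat -> Prop) (m : nat) : Prop :=
  P m /\ forall k, P k -> m <= k.

(* Main.v *)
Require Import Defs.
From mathcomp Require Import all_boot zify.
From Stdlib Require Import Classical.

Lemma size_tau x : size (tau x) = 4. Proof. by case: x. Qed.
Lemma tau_wordE x w : tau_word (x :: w) = tau x ++ tau_word w. Proof. by []. Qed.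
Lemma tau_word_rcons w x : tau_word (rcons w x) = tau_word w ++ tau x.
Proof. by rewrite /tau_word -cats1 map_cat flatten_cat /= cats0. Qed.
Lemma rev_tau_word w : rev (tau_word w) = tau_word (rev w).
Proof.
elim: w => [|x w IH] //=. rewrite tau_wordE rev_cat IH rev_cons tau_word_rcons.
by case: x.
Qed.
Lemma size_tau_word w : size (tau_word w) = 4 * size w.
Proof. elim: w => [|x w IH] //=; rewrite tau_wordE size_cat size_tau IH; lia. Qed.
Lemma tau_word_inj : injective tau_word.
Proof.
elim=> [|x w IH] [|y w'] //.
- by move/(congr1 size); rewrite !size_tau_word.
- by move/(congr1 size); rewrite !size_tau_word.
rewrite !tau_wordE => /eqP; rewrite eqseq_cat ?size_tau // => /andP[/eqP h /eqP /IH ->].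
by move: h; case: x; case: y.
Qed.
Lemma pal_tau_word w : palindrome (tau_word w) = palindrome w.
Proof.
rewrite /palindrome rev_tau_word; apply/eqP/eqP => [/tau_word_inj|h] //; by rewrite -h.
Qed.

Lemma size_tm k : size (tm_prefix k) = 4 ^ k.
Proof.
elim: k => [|k IH] //. rewrite /tm_prefix iterS -/(tm_prefix k) size_tau_word IH expnS //.
Qed.
Lemma tm_prefixS k : tm_prefix k.+1 = tau_word (tm_prefix k).
Proof. by rewrite /tm_prefix iterS. Qed.

Lemma nth_tau_word w m j : m < size w -> j < 4 ->
  nth false (tau_word w) (4 * m + j) = nth false (tau (nth false w m)) j.
Proof.
elim: w m => [|x w IH] [|m] //= hm hj.
- by rewrite tau_wordE nth_cat size_tau add0n hj.
- rewrite tau_wordE nth_cat size_tau ifF; last lia.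
  have -> : 4 * m.+1 + j - 4 = 4 * m + j by lia.
  by apply: IH.
Qed.

Lemma tm_stepS k i : i < 4 ^ k -> nth false (tm_prefix k.+1) i = nth false (tm_prefix k) i.
Proof.
elim: k i => [|k IH] i hi.
  by rewrite expn0 ltnS leqn0 in hi; rewrite (eqP hi).
have hd : i %/ 4 < 4 ^ k by rewrite ltn_divLR // mulnC -expnS.
have hm : i %% 4 < 4 by rewrite ltn_mod.
rewrite (divn_eq i 4) mulnC tm_prefixS nth_tau_word ?size_tm //; last first.
  by apply: (leq_trans hd); rewrite leq_exp2l.
rewrite IH // [in RHS]tm_prefixS nth_tau_word ?size_tm //.
Qed.

Lemma tm_stable k k' i : k <= k' -> i < 4 ^ k -> nth false (tm_prefix k') i = nth false (tm_prefix k) i.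
Proof.
move=> /subnKC <-; elim: (k' - k) => [|d IH] hi; first by rewrite addn0.
rewrite addnS tm_stepS ?IH //. apply: (leq_trans hi); rewrite leq_exp2l //; lia.
Qed.

Lemma tE k i : i < 4 ^ k -> t i.+1 = nth false (tm_prefix k) i.
Proof.
move=> hi. rewrite /t /=.
have hi' : i < 4 ^ i.+1 by apply: (leq_trans (ltnSn i)); apply: ltnW; apply: ltn_expl.
by rewrite -(@tm_stable i.+1 (maxn k i.+1) i) ?leq_maxr // (@tm_stable k (maxn k i.+1) i) // leq_maxl.
Qed.

Lemma t4 m j : j < 4 -> t (4 * m + j).+1 = nth false (tau (t m.+1)) j.
Proof.
move=> hj.
have hm : m < 4 ^ m.+1 by apply: ltnW; apply: ltn_expl.
rewrite (@tE m.+2); last first.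
  rewrite expnS; have : 4 * m + j < 4 * (m + 1) by lia.
  move/leq_trans; apply; rewrite leq_mul2l /=; lia.
by rewrite tm_prefixS nth_tau_word ?size_tm // -(tE hm).
Qed.

Lemma factor4_aux a L :
  map t (iota (4 * a).+1 (4 * L)) = tau_word (map t (iota a.+1 L)).
Proof.
elim: L a => [|L IH] a; first by rewrite muln0.
rewrite mulnS iotaD map_cat.
have -> : (4 * a).+1 + 4 = (4 * a.+1).+1 by lia.
rewrite IH /= tau_wordE.
have h0 := t4 a 0 isT. rewrite addn0 in h0.
have h1 := t4 a 1 isT. rewrite addn1 in h1.
have h2 := t4 a 2 isT. rewrite addn2 in h2.
have h3 := t4 a 3 isT. rewrite addn3 in h3.
rewrite h0 h1 h2 h3. by case: (t a.+1).
Qed.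

Lemma factor4 a b : factor (4 * a) (4 * b) = tau_word (factor a b).
Proof. by rewrite /factor -mulnBr factor4_aux. Qed.

Lemma zip_map2 (f : nat -> nat) (s1 s2 : seq nat) :
  zip (map f s1) (map f s2) = map (fun p => (f p.1, f p.2)) (zip s1 s2).
Proof. by elim: s1 s2 => [|x s1 IH] [|y s2] //=; rewrite IH. Qed.

Lemma pal_cuts4 N es : pal_cuts (4 * N) (map (muln 4) es) = pal_cuts N es.
Proof.
rewrite /pal_cuts.
have e0 : 0 :: map (muln 4) es = map (muln 4) (0 :: es) by rewrite /= muln0.
rewrite e0 sorted_map.
have -> : sorted (relpre (muln 4) ltn) (0 :: es) = sorted ltn (0 :: es).
  by rewrite /= (@eq_path _ _ ltn) // => x y /=; rewrite ltn_pmul2l.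
have -> : last 0 (map (muln 4) es) = 4 * last 0 es by rewrite -(muln0 4) last_map.
rewrite eqn_pmul2l // zip_map2 all_map.
congr [&& _, _ & _]; apply: eq_all => -[x y] /=.
by rewrite factor4 pal_tau_word.
Qed.

Lemma zip_cons_rcons x (es : seq nat) M :
  zip (x :: rcons es M) (rcons es M) = rcons (zip (x :: es) es) (last x es, M).
Proof. by elim: es x => [|y es IH] x //=; rewrite IH. Qed.

Lemma has_decomp_ex n : exists k, has_decomp n k.
Proof.
elim: n => [|n [k [es [hs hc]]]]; first by exists 0, [::].
exists k.+1, (rcons es n.+1); split; first by rewrite size_rcons hs.
move: hc; rewrite /pal_cuts => /and3P[h1 /eqP h2 h3].
rewrite -rcons_cons /= rcons_path last_rcons eqxx zip_cons_rcons all_rcons h3 h2.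
move: h1 => /= -> /=; rewrite ltnSn /= /palindrome /factor subSnn /=.
by rewrite andbT.
Qed.

Lemma min_ex (P : nat -> Prop) : (exists k, P k) -> exists m, is_min P m.
Proof.
move=> [k hk]; elim: k {-2}k (leqnn k) hk => [|N IH] k hkN hk.
  exists k; split => // j _; rewrite leqn0 in hkN; by rewrite (eqP hkN).
destruct (classic (exists j, P j /\ j < k)) as [[j [hj hjk]]|hn].
  by apply: (IH j) => //; lia.
exists k; split => // j hj; rewrite leqNgt; apply/negP => hjk; apply: hn; by exists j.
Qed.

Lemma decomp_equiv n j : has_decomp n j <-> has_decomp0 (4 * n) j.
Proof.
split.
- move=> [es [hs hc]]; exists (map (muln 4) es); split; first by rewrite size_map.
  rewrite pal_cuts4; split => //; rewrite all_map; apply/allP => x _ /=; exact: dvdn_mulr.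
- move=> [es [hs [hc hd]]].
  have he : es = map (muln 4) (map (divn^~ 4) es).
    elim: es hd {hs hc} => [|x es IH] //= /andP[hx hd]; rewrite -IH //.
    by rewrite mulnC divnK.
  exists (map (divn^~ 4) es); split; first by rewrite size_map.
  by rewrite -pal_cuts4 -he.
Qed.

Theorem proposition7 (n : nat) (hn : 1 <= n) :
  exists k k',
    [/\ is_min (has_decomp n) k,
        is_min (has_decomp0 (4 * n)) k,
        is_min (has_decomp (4 * n)) k' &
        k' <= k].
Proof.
have [k [hk hmin]] := @min_ex _ (has_decomp_ex n).
have [k' [hk' hmin']] := @min_ex _ (has_decomp_ex (4 * n)).
exists k, k'; split => //.
- split; first by apply/decomp_equiv.
  by move=> j /decomp_equiv; apply: hmin.
- apply: hmin'. have [es [hs [hc _]]] := proj1 (decomp_equiv n k) hk.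
  by exists es.
Qed.
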